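(* Let $G,H\in\mathcal{C}_{n,m}$ and suppose $W_G(x,y)-W_H(x,y)=(1-xy)P(x,y)$ for some nonnegative polynomial $P$. Then $N_i^{(k)}(H)\le N_i^{(k)}(G)$ for every $i\in\{0,1,\ldots,m\}$ and every $k\in\{1,2,\ldots,n\}$.
   Context: $\mathcal{C}_{n,m}$ denotes the set of all connected simple graphs on $n$ vertices and $m$ edges. For a graph $G$ with vertex set $V$, $\kappa(G)$ is its number of connected components, $r(G)=|V|-\kappa(G)$, $c(G)=|E(G)|-|V|+\kappa(G)$. $\mathcal{S}(G)$ is the set of all spanning subgraphs of $G$. The Whitney polynomial is $W_G(x,y)=\sum_{H\in\mathcal{S}(G)}x^{r(G)-r(H)}y^{c(H)}$. A bivariate polynomial is nonnegative if all its coefficients (in the monomial basis $x^iy^j$) are nonnegative real numbers. For $i\in\{0,\ldots,m\}$ and $k\in\{1,\ldots,n\}$, $N_i^{(k)}(G)$ is the number of spanning subgraphs of $G$ having exactly $i$ edges and at most $k$ connected components. *)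

(* Defs.v *)
From mathcomp Require Import all_boot all_order all_algebra.
Set Implicit Arguments. Unset Strict Implicit. Unset Printing Implicit Defensive.
Import GRing.Theory Num.Theory.

(* A simple graph on vertex set 'I_n is given by its edge set: a set of
   2-element subsets of 'I_n.  A spanning subgraph is a subset of the edge set. *)

Definition simple_edges n (E : {set {set 'I_n}}) : bool :=
  [forall e in E, #|e| == 2].

Definition adj n (S : {set {set 'I_n}}) : rel 'I_n :=
  fun x y => [set x; y] \in S.

Definition kappa n (S : {set {set 'I_n}}) : nat :=
  n_comp (connect (adj S)) 'I_n.

(* rank r = |V| - kappa ;  nullity c = |E| - |V| + kappa (always >= 0) *)
Definition rk n (S : {set {set 'I_n}}) : nat := n - kappa S.
Definition nul n (S : {set {set 'I_n}}) : nat := #|S| + kappa S - n.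

Definition inC n m (E : {set {set 'I_n}}) : Prop :=
  simple_edges E /\ #|E| = m /\ kappa E = 1%N.

(* Whitney polynomial in {poly {poly R}}: outer variable x, inner variable y.
   The monomial x^a y^b is (('X^b)%:P) * 'X^a. *)
Definition whitney (R : nzRingType) n (E : {set {set 'I_n}}) : {poly {poly R}} :=
  (\sum_(S in powerset E) (('X^(nul S) : {poly R})%:P * 'X^(rk E - rk S)))%R.

Definition nonneg_poly2 (R : numDomainType) (P : {poly {poly R}}) : Prop :=
  forall i j : nat, (0 <= (P`_i)`_j)%R.

Definition Nik n (E : {set {set 'I_n}}) (i k : nat) : nat :=
  #|[set S in powerset E | (#|S| == i) && (kappa S <= k)]|.

(* Main.v *)
Require Import Defs.
From mathcomp Require Import all_boot all_order all_algebra zify.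
Import GRing.Theory Num.Theory.
Set Implicit Arguments. Unset Strict Implicit.

Section Graph.
Variable T : finType.
Implicit Types S : {set {set T}}.

Definition adjT S : rel T := fun x y => [set x; y] \in S.

Lemma adjT_sym S : symmetric (adjT S).
Proof. by move=> x y; rewrite /adjT setUC. Qed.

Lemma csym S : connect_sym (adjT S).
Proof. exact: sym_connect_sym (@adjT_sym S). Qed.

Lemma roots_base : #|roots (adjT set0)| = #|T|.
Proof.
apply: eq_card => x; rewrite !inE /roots /=.
have := connect_root (adjT set0) x.
move/connectP=> [[|z p] h ->]; first by rewrite eqxx.
by move: h; rewrite /= {1}/adjT inE.
Qed.

Lemma roots_add S u v :
  #|roots (adjT S)| <= #|roots (adjT ([set u; v] |: S))| + 1.
Proof.
set S' := [set u; v] |: S.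
set c := connect (adjT S).
set P := fun x => c x u || c x v.
have Pc : forall x z, c x z -> P z -> P x.
  move=> x z hxz /orP [h|h]; apply/orP; [left|right]; exact: connect_trans hxz h.
have Pc' : forall x z, c z x -> P z -> P x.
  move=> x z hxz; apply: (Pc x z); by rewrite /c csym.
have Q : forall x y, connect (adjT S') x y -> c x y || (P x && P y).
  move=> x y /connectP [p pth ->] {y}.
  elim: p x pth => [|z p IH] x /=; first by rewrite /c connect0.
  case/andP=> hxz hp; have := IH z hp.
  move: hxz; rewrite /adjT in_setU1 => /orP [/eqP he|hxz].
    have Px : P x.
      have : x \in [set u; v] by rewrite -he !inE eqxx.
      by rewrite !inE => /orP [/eqP->|/eqP->]; rewrite /P /c connect0 ?orbT.
    have Pz : P z.
      have : z \in [set u; v] by rewrite -he !inE eqxx orbT.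
      by rewrite !inE => /orP [/eqP->|/eqP->]; rewrite /P /c connect0 ?orbT.
    case/orP=> [hzy|/andP [_ Py]]; last by rewrite Px Py orbT.
    by rewrite Px (Pc' _ _ hzy Pz) orbT.
  have cxz : c x z by exact: connect1.
  case/orP=> [hzy|/andP [Pz Py]]; first by apply/orP; left; exact: connect_trans cxz hzy.
  by rewrite (Pc _ _ cxz Pz) Py orbT.
set A := [set r | roots (adjT S) r] :\ fingraph.root (adjT S) v.
have hA : #|roots (adjT S)| <= #|A| + 1.
  by rewrite -cardsE (cardsD1 (fingraph.root (adjT S) v) [set r | roots (adjT S) r]) -/A addnC leq_add2l leq_b1.
have inj : {in A &, injective (fingraph.root (adjT S'))}.
  move=> r1 r2; rewrite !inE => /andP [n1 /eqP e1] /andP [n2 /eqP e2] /eqP.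
  rewrite root_connect; last exact: csym.
  have eq12 : c r1 r2 -> r1 = r2.
    move=> h; apply/eqP; rewrite -{1}e1 -e2.
    by rewrite (root_connect (@csym S)).
  move/Q=> /orP [|/andP [P1 P2]]; first exact: eq12.
  apply: eq12.
  have h1 : c r1 u.
    case/orP: P1 => // h; exfalso; apply/negP: n1; rewrite negbK; apply/eqP.
    rewrite -{1}e1; apply/eqP; by rewrite (root_connect (@csym S)).
  have h2 : c r2 u.
    case/orP: P2 => // h; exfalso; apply/negP: n2; rewrite negbK; apply/eqP.
    rewrite -{1}e2; apply/eqP; by rewrite (root_connect (@csym S)).
  by apply: connect_trans h1 _; rewrite csym.
have sub : fingraph.root (adjT S') @: A \subset [set r | roots (adjT S') r].
  apply/subsetP => y /imsetP [r _ ->]; rewrite inE; apply: roots_root; exact: csym.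
have := subset_leq_card sub; rewrite card_in_imset // (cardsE (roots (adjT S'))) => h.
exact: leq_trans hA (leq_add h (leqnn 1)).
Qed.

Lemma bound_roots S : (forall e, e \in S -> #|e| == 2) ->
  #|T| <= #|S| + #|roots (adjT S)|.
Proof.
have [m le] := ubnP #|S|; elim: m S le => // m IH S hS hsimp.
have [->|[e eS]] := set_0Vmem S; first by rewrite roots_base cards0.
have := hsimp e eS; case/cards2P => u [v [_ ev]].
have hS' : #|S :\ e| < m by move: hS; rewrite (cardsD1 e S) eS.
have := IH _ hS' (fun f hf => hsimp f (subsetP (subsetDl S [set e]) f hf)).
have eq : S = [set u; v] |: (S :\ e) by rewrite -ev setD1K.
have := roots_add (S :\ e) u v; rewrite -eq => h1 h2.
rewrite (cardsD1 e S) eS; lia.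
Qed.

Lemma roots_pos S : 0 < #|T| -> 0 < #|roots (adjT S)|.
Proof.
move/card_gt0P=> [x _]; apply/card_gt0P; exists (fingraph.root (adjT S) x).
by rewrite inE; apply: roots_root; exact: csym.
Qed.

End Graph.

Lemma kappaE n (S : {set {set 'I_n}}) : kappa S = #|roots (adjT S)|.
Proof.
rewrite /kappa (@eq_n_comp _ _ (@adjT _ S)); last first.
  move=> x y; apply/idP/idP; last exact: connect1.
  by apply: connect_sub => a b h.
by apply: eq_card => x; rewrite !inE andbT.
Qed.

Set Implicit Arguments. Unset Strict Implicit.

Lemma cond_eq n i k kap s : (1 <= kap <= n)%N -> (n <= s + kap)%N ->
  [&& ((n-1)-(n-kap) < k)%N, (n <= (n-1)-(n-kap)+i.+1)%N &
      ((n-1)-(n-kap)+i.+1-n == s + kap - n)%N] = (s == i) && (kap <= k)%N.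
Proof.
move=> /andP [h1 h2] h3.
apply/idP/idP => [/and3P[a1 a2 /eqP a3]|/andP[/eqP a1 a2]].
  apply/andP; split; [apply/eqP|]; lia.
apply/and3P; split; [lia|lia|apply/eqP; lia].
Qed.

Section Poly.
Variable R : realFieldType.
Local Open Scope ring_scope.

Definition Ff (n i k : nat) (Q : {poly {poly R}}) : R :=
  \sum_(a < k) (if (n <= a + i.+1)%N then Q`_a`_(a + i.+1 - n) else 0).

Lemma FfB n i k Q1 Q2 : Ff n i k (Q1 - Q2) = Ff n i k Q1 - Ff n i k Q2.
Proof.
rewrite /Ff -sumrB; apply: eq_bigr => a _; case: ifP; rewrite ?subr0 // => _.
by rewrite !coefB.
Qed.

Lemma coefXY (P : {poly {poly R}}) a b :
  (('X%:P * 'X * P)`_a`_b) = if (a == 0)%N || (b == 0)%N then 0 else P`_a.-1`_b.-1.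
Proof.
rewrite -mulrA coefCM coefXM; case: (a == 0)%N => /=; first by rewrite mulr0 coef0.
by rewrite coefXM.
Qed.

Lemma Ff_shift n i k P : Ff n i k.+1 ((1 - 'X%:P * 'X) * P) =
  if (n <= k + i.+1)%N then P`_k`_(k + i.+1 - n) else 0.
Proof.
rewrite mulrBl mul1r FfB {1}/Ff big_ord_recr /= /Ff big_ord_recl /=.
rewrite coefXY /= if_same add0r.
have E : forall a : nat,
  (if (n <= a.+1 + i.+1)%N then ('X%:P * 'X * P)`_a.+1`_(a.+1 + i.+1 - n) else 0)
  = (if (n <= a + i.+1)%N then P`_a`_(a + i.+1 - n) else 0).
  move=> a; rewrite coefXY /=.
  case: (leqP n (a + i.+1)) => h1.
    rewrite ifT; last lia.
    case: eqP => [?|_]; first lia.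
    by rewrite (_ : (a.+1 + i.+1 - n).-1 = a + i.+1 - n)%N //; lia.
  case: ifP => // h2; case: eqP => // h3; exfalso; lia.
under [X in _ - X]eq_bigr => j _ do rewrite /bump /= add1n E.
by rewrite addrAC subrr add0r.
Qed.

Lemma sum_ind k e (q : nat -> bool) :
  \sum_(a < k) ((((a : nat) == e) && q a)%:R : R) = ((e < k)%N && q e)%:R.
Proof.
elim: k => [|k IH]; first by rewrite big_ord0.
rewrite big_ord_recr /= IH.
case: (ltngtP e k) => h /=.
- by rewrite ltnS (ltnW h) addr0.
- have -> : (e < k.+1)%N = false by apply/negbTE; lia.
  by rewrite addr0.
- by rewrite h ltnSn /= add0r.
Qed.

Lemma Ff_whitney n i k (E : {set {set 'I_n}}) :
  Ff n i k (whitney R E) = \sum_(S in powerset E)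
    ([&& (rk E - rk S < k)%N, (n <= (rk E - rk S)%N + i.+1)%N &
      ((rk E - rk S)%N + i.+1 - n == nul S)%N]%:R : R).
Proof.
rewrite /Ff /whitney.
rewrite (eq_bigr (fun a : 'I_k => \sum_(S in powerset E)
   (if (n <= a + i.+1)%N then ((('X^(nul S))%:P * 'X^(rk E - rk S)%N)`_a)`_(a + i.+1 - n) else 0))); last first.
  move=> a _; case: ifP => _; last by rewrite big1.
  by rewrite !coef_sum.
rewrite exchange_big /=; apply: eq_bigr => S _.
rewrite -(sum_ind k (rk E - rk S)%N (fun a => (n <= a + i.+1)%N && (a + i.+1 - n == nul S)%N)).
apply: eq_bigr => a _.
rewrite coefCM coefXn.
case: (_ == _)%N => /=; rewrite ?mulr1 ?mulr0 ?coef0 ?coefXn ?if_same //.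
by case: (n <= a + i.+1)%N.
Qed.

Lemma sum_card (T : finType) (A : {set T}) (b : T -> bool) :
  \sum_(x in A) ((b x)%:R : R) = (#|[set x in A | b x]|)%:R.
Proof.
rewrite -sum1_card natr_sum big_mkcond [RHS]big_mkcond /=.
apply: eq_bigr => x _; rewrite inE; by case: (x \in A); case: (b x).
Qed.

End Poly.

Unset Implicit Arguments.

Lemma facts n (E S : {set {set 'I_n}}) : simple_edges E -> S \in powerset E ->
  (0 < n)%N -> [/\ (1 <= kappa S <= n)%N & (n <= #|S| + kappa S)%N].
Proof.
move=> sE; rewrite powersetE => sub n0.
have hs : forall e, e \in S -> #|e| == 2.
  move=> e eS; move/forallP: sE => /(_ e) /implyP; apply; exact: (subsetP sub).
rewrite kappaE; split.
  apply/andP; split; first by apply: roots_pos; rewrite card_ord.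
  by apply: leq_trans (max_card _) _; rewrite card_ord.
by have := bound_roots hs; rewrite card_ord.
Qed.

Lemma sum_Nik (R : realFieldType) n (E : {set {set 'I_n}}) i k :
  (\sum_(S in powerset E) (((#|S| == i) && (kappa S <= k)%N)%:R : R))%R = ((Nik E i k)%:R)%R.
Proof. rewrite /Nik. exact: (sum_card R (powerset E) (fun S => (#|S| == i) && (kappa S <= k)%N)). Qed.

Theorem mainTheorem3 (R : realFieldType) (n m : nat) (G H : {set {set 'I_n}}) :
  inC m G -> inC m H ->
  (exists P : {poly {poly R}}, nonneg_poly2 P /\
     (whitney R G - whitney R H = (1 - ('X%:P * 'X)) * P)%R) ->
  forall i k : nat, (i <= m)%N -> (1 <= k <= n)%N -> (Nik H i k <= Nik G i k)%N.
Proof.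
move=> hG hH [P [P0 hP]] i k hi /andP [k1 kn].
case: k k1 kn => // k _ kn.
have hEq : forall E : {set {set 'I_n}}, inC m E -> @Ff R n i k.+1 (whitney R E) = ((Nik E i k.+1)%:R)%R.
  move=> E [sE [cE kE]].
  rewrite Ff_whitney /Nik.
  transitivity ((\sum_(S in powerset E) (((#|S| == i) && (kappa S <= k.+1)%N)%:R : R))%R);
    last exact: sum_Nik.
  apply: eq_bigr => S SE.
  have n0 : (0 < n)%N.
    have h := max_card (mem (roots (adjT E))).
    by rewrite -kappaE kE card_ord in h.
  have [h1 h2] := @facts n E S sE SE n0.
  rewrite /rk kE /nul.
  by rewrite (cond_eq i k.+1 h1 h2).
have := congr1 (@Ff R n i k.+1) hP.
rewrite FfB Ff_shift. have hG' := hEq G hG. have hH' := hEq H hH.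
move: hG' hH'. generalize (@Ff R n i k.+1 (whitney R G)) (@Ff R n i k.+1 (whitney R H)).
move=> a b -> -> h.
rewrite -(ler_nat R) -subr_ge0 h; case: ifP => // _; exact: P0.
Qed.
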